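(* Let $\phi$ be a function from $\mathbb{Z}^d$ to $[0,+\infty)$ such that $\sum_{y\in\mathbb{Z}^d}\phi(y)^2=N$. For any $N\ge1$ and any $\alpha\in(0,1)$, $$P(f_N=\phi)\le\frac{\phi(0)}{\alpha}\exp\Big(-\frac12\mathcal{E}(\phi)+\alpha\sqrt{N|\mathrm{supp}\,\phi|}\Big).$$
   Context: $P$ is the law of the simple random walk $(S_k)$ on $\mathbb{Z}^d$ started at $0$; $L_N(x)=\sum_{k=0}^{N-1}1_{\{S_k=x\}}$ and $f_N=\sqrt{L_N}$. $\mathcal{E}(f)=\frac1{2d}\sum_{y,z\in\mathbb{Z}^d,|y-z|=1}(f(y)-f(z))^2$ (ordered pairs). $\mathrm{supp}\,\phi=\{y:\phi(y)\ne0\}$ and $|\cdot|$ denotes cardinality. *)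

(* Defs.v *)
From HB Require Import structures.
From mathcomp Require Import all_boot all_order all_algebra.
From mathcomp Require Import all_classical all_reals all_analysis.
From mathcomp Require Import finmap.
Set Implicit Arguments. Unset Strict Implicit. Unset Printing Implicit Defensive.
Import Order.TTheory GRing.Theory Num.Theory.
Local Open Scope ring_scope.

Definition Zd (d : nat) := {ffun 'I_d -> int}.

Definition origin (d : nat) : Zd d := [ffun _ => 0%Z].

Definition step (d : nat) (s : 'I_d * bool) : Zd d :=
  [ffun j => if j == s.1 then (if s.2 then 1%Z else (-1)%Z) else 0%Z].

Definition pos (d : nat) (w : seq ('I_d * bool)) (k : nat) : Zd d :=
  [ffun j => \sum_(s <- take k w) step s j].

Definition local_time (d : nat) (w : seq ('I_d * bool)) (N : nat) (x : Zd d) : nat :=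
  count (fun k => pos w k == x) (iota 0 N).

Definition fN (R : realType) (d : nat) (w : seq ('I_d * bool)) (N : nat) (x : Zd d) : R :=
  Num.sqrt ((local_time w N x)%:R).

(* P(f_N = phi): the event only depends on the first N-1 steps, which under P
   are i.i.d. uniform in the 2d unit directions; so its probability is the
   number of step sequences of length N-1 realizing it divided by (2d)^(N-1). *)
Definition prob_fN_eq (R : realType) (d N : nat) (phi : Zd d -> R) : R :=
  (#|[set w : N.-1.-tuple ('I_d * bool) | `[< forall x, fN R w N x = phi x >] ]|)%:R
  / ((2 * d)%:R ^+ N.-1).

Definition adjacent (d : nat) (y z : Zd d) : bool :=
  (\sum_(i < d) `|y i - z i|)%N == 1%N.

(* Dirichlet energy E(phi) = 1/(2d) sum over ordered adjacent pairs of (phi y - phi z)^2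
   (an esum of nonnegative terms; finite when phi has finite support). *)
Definition energy (R : realType) (d : nat) (phi : Zd d -> R) : R :=
  fine (\esum_(p in [set p : Zd d * Zd d | adjacent p.1 p.2])
          (((phi p.1 - phi p.2) ^+ 2)%:E)) / (2 * d)%:R.

Definition supp (R : realType) (d : nat) (phi : Zd d -> R) : set (Zd d) :=
  [set y | phi y != 0].

(* Main.v *)
Require Import Defs.
From HB Require Import structures.
From mathcomp Require Import all_boot all_order all_algebra.
From mathcomp Require Import all_classical all_reals all_analysis.
From mathcomp Require Import finmap.
From mathcomp Require Import zify ring lra.
Import Order.TTheory GRing.Theory Num.Theory.
Set Implicit Arguments. Unset Strict Implicit. Unset Printing Implicit Defensive.
Local Open Scope ring_scope.

Section Walk.
Variable d : nat.
Local Notation S := ('I_d * bool)%type.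

Lemma pos0 (w : seq S) : pos w 0 = 0.
Proof. by apply/ffunP => j; rewrite !ffunE take0 big_nil. Qed.

Lemma posS (s : S) (w : seq S) k : pos (s :: w) k.+1 = step s + pos w k.
Proof. by apply/ffunP => j; rewrite !ffunE /= big_cons ffunE. Qed.

Lemma origin0 : origin d = 0.
Proof. by apply/ffunP => j; rewrite !ffunE. Qed.

Lemma step_inj : injective (@step d).
Proof.
move=> [i b] [i' b'] /ffunP H.
have := H i; rewrite !ffunE /= eqxx.
case: (eqVneq i i') => [<-|ne]; clear H.
  by case: b; case: b' => //=.
by case: b.
Qed.

Lemma stepN (i : 'I_d) b : step (i, ~~ b) = - step (i, b).
Proof. by apply/ffunP => j; rewrite !ffunE /=; case: (j == i); case: b. Qed.

Lemma adjacent_step (y z : Zd d) : Defs.adjacent y z -> exists s, z = y + step s.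
Proof.
rewrite /Defs.adjacent => /eqP H.
have [i Hi] : exists i : 'I_d, `|y i - z i|%N != 0%N.
  apply/existsP; apply: contraT; rewrite negb_exists => /forallP Hall.
  by move: H; rewrite big1 // => i _; apply/eqP; rewrite -[_ == _]negbK Hall.
move: H; rewrite (bigD1 i) //=.
move: Hi; set a := `|y i - z i|%N; set b := (\sum_(j < d | j != i) _)%N => Hi H.
have Hr : b = 0%N by lia.
have Hi1 : a = 1%N by lia.
clear H; rewrite {}/a {}/b in Hi Hi1 Hr.
move/eqP: Hr; rewrite sum_nat_eq0 => /forallP Hr.
exists (i, (z i - y i == 1%Z)).
apply/ffunP => j; rewrite !ffunE /=.
case: (eqVneq j i) => [->|ne].
  have H2 : (y i - z i = 1 \/ y i - z i = -1)%R.
    move: Hi1; case: (y i - z i) => [n|n] /=.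
      by move=> ->; left.
    by case: n => // _; right.
  case: H2 => e.
    have -> : (z i - y i == 1%Z) = false by apply/eqP; lia.
    simpl; lia.
  have -> : (z i - y i == 1%Z) = true by apply/eqP; lia.
  simpl; lia.
have := Hr j; rewrite ne /= => /eqP H3.
have : y j = z j by lia.
by move=> ->; rewrite addr0.
Qed.

End Walk.

Section Path.
Variable R : realType.
Variable d : nat.
Local Notation S := ('I_d * bool)%type.
Variable h : Zd d -> R.
Definition Sh (x : Zd d) : R := \sum_(s : S) h (x + step s).
Definition qq (x : Zd d) (s : S) : R := h (x + step s) / Sh x.
Fixpoint Wx (x : Zd d) (w : seq S) : R :=
  match w with [::] => 1 | s :: w' => qq x s * Wx (x + step s) w' end.

Hypothesis Sh_neq0 : forall x, Sh x != 0.

Lemma Wx_sum n x : \sum_(t : n.-tuple S) Wx x t = 1.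
Proof.
elim: n x => [|n IH] x.
  rewrite (eq_bigr (fun _ => 1)); last by move=> t _; rewrite tuple0.
  by rewrite sumr_const card_tuple expn0.
rewrite (reindex (fun p : S * n.-tuple S => [tuple of p.1 :: p.2])) /=; last first.
  exists (fun t : n.+1.-tuple S => (thead t, [tuple of behead t])).
    by move=> [s t] _ /=; congr pair; apply: val_inj.
  by move=> t _; rewrite [RHS]tuple_eta.
rewrite -(pair_bigA _ (fun s (t : n.-tuple S) => qq x s * Wx (x + step s) t)) /=.
rewrite (eq_bigr (fun s => qq x s)); last by move=> s _; rewrite -mulr_sumr IH mulr1.
by rewrite /qq -mulr_suml divff ?Sh_neq0.
Qed.

Lemma Wx_tele x (w : seq S) :
  Wx x w * h x = Sh (x + pos w (size w)) *
    \prod_(k < (size w).+1) (h (x + pos w k) / Sh (x + pos w k)).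
Proof.
elim: w x => [|s w IH] x /=.
  by rewrite big_ord1 pos0 addr0 mul1r mulrC divfK.
rewrite posS addrA big_ord_recl /= pos0 addr0.
rewrite (eq_bigr (fun k : 'I_(size w).+1 => h (x + step s + pos w k) / Sh (x + step s + pos w k))); last first.
  by move=> k _; rewrite /bump /= add1n posS addrA.
rewrite mulrCA -IH /qq.
by ring.
Qed.

Lemma Wx_ge0 x w : (forall y, 0 <= h y) -> 0 <= Wx x w.
Proof.
move=> h0; elim: w x => [|s w IH] x /=; first by [].
apply: mulr_ge0 => //; apply: divr_ge0 => //; apply: sumr_ge0 => *; exact: h0.
Qed.
End Path.

Section Sums.
Variable R : realType.

Lemma sumr_const_seq (T : Type) (s : seq T) (c : R) : \sum_(x <- s) c = (size s)%:R * c.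
Proof. elim: s => [|x s IH]; rewrite ?big_nil ?big_cons ?mul0r // IH /=. rewrite -addn1 natrD; lra. Qed.

Lemma two_ab (a b : R) : 2 * a * b <= a ^+ 2 + b ^+ 2.
Proof. have := sqr_ge0 (a - b). rewrite sqrrB. lra. Qed.

Lemma sum_sub_le (T : eqType) (s1 s2 : seq T) (f : T -> R) :
  uniq s1 -> uniq s2 -> {subset s1 <= s2} -> (forall x, x \in s2 -> 0 <= f x) ->
  \sum_(x <- s1) f x <= \sum_(x <- s2) f x.
Proof.
move=> u1 u2 sub f0.
rewrite [leRHS](bigID (fun x => x \in s1)) /=.
have -> : \sum_(i <- s2 | i \in s1) f i = \sum_(x <- s1) f x.
  rewrite -big_filter; apply: perm_big; apply: uniq_perm.
  - exact: filter_uniq.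
  - exact: u1.
  - by move=> x; rewrite mem_filter; apply/andP/idP => [[]//|H]; split=> //; apply: sub.
rewrite lerDl; rewrite big_seq_cond; apply: sumr_ge0 => x /andP[Hx _]; exact: f0.
Qed.

Lemma sum_sub_le0 (T : eqType) (s1 s2 : seq T) (f : T -> R) :
  uniq s1 -> uniq s2 -> (forall x, x \in s1 -> x \notin s2 -> f x = 0) ->
  (forall x, x \in s2 -> 0 <= f x) ->
  \sum_(x <- s1) f x <= \sum_(x <- s2) f x.
Proof.
move=> u1 u2 z f0.
rewrite [leLHS](bigID (fun x => x \in s2)) /=.
rewrite [X in _ + X]big_seq_cond [X in _ + X]big1 ?addr0; last first.
  by move=> x /andP[H1 H2]; apply: z.
rewrite -big_filter; apply: sum_sub_le => //.
- exact: filter_uniq.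
- by move=> x; rewrite mem_filter => /andP[].
Qed.

Lemma cauchy_schwarz (T : Type) (s : seq T) (f : T -> R) :
  (\sum_(x <- s) f x) ^+ 2 <= (size s)%:R * \sum_(x <- s) f x ^+ 2.
Proof.
have E1 : (\sum_(x <- s) f x) ^+ 2 = \sum_(x <- s) \sum_(y <- s) f x * f y.
  by rewrite expr2 mulr_suml; apply: eq_bigr => x _; rewrite mulr_sumr.
have E2 : \sum_(x <- s) \sum_(y <- s) (f x ^+ 2 + f y ^+ 2) =
   2 * ((size s)%:R * \sum_(x <- s) f x ^+ 2).
  rewrite (eq_bigr (fun x => (size s)%:R * f x ^+ 2 + \sum_(y <- s) f y ^+ 2)); last first.
    by move=> x _; rewrite big_split /= sumr_const_seq.
  by rewrite big_split /= sumr_const_seq -mulr_sumr; lra.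
have : 2 * (\sum_(x <- s) f x) ^+ 2 <= 2 * ((size s)%:R * \sum_(x <- s) f x ^+ 2).
  rewrite E1 -E2 mulr_sumr; apply: ler_sum => x _; rewrite mulr_sumr; apply: ler_sum => y _.
  rewrite mulrA; exact: two_ab.
lra.
Qed.
End Sums.

Section Energy.
Variable R : realType.
Variable d : nat.
Local Notation S := ('I_d * bool)%type.

Lemma card_S : #|{: S}| = (2 * d)%N.
Proof. by rewrite card_prod card_ord card_bool mulnC. Qed.

Definition SS (phi : Zd d -> R) (K : seq (Zd d)) : R :=
  \sum_(x <- K) \sum_(s : S) phi x * phi (x + step s).

Lemma energy_le (phi : Zd d -> R) (K : seq (Zd d)) (Nr : R) :
  (0 < d)%N -> uniq K -> (forall x, phi x != 0 -> x \in K) -> (forall x, 0 <= phi x) ->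
  \sum_(x <- K) phi x ^+ 2 = Nr ->
  energy phi <= 2 * Nr - (d%:R)^-1 * SS phi K.
Proof.
move=> d0 uK inK phi0 sumK.
set B := undup (K ++ [seq x + step s | x <- K, s <- index_enum S]).
set T := [seq (x, x + step s) | x <- B, s <- index_enum S].
have uB : uniq B by exact: undup_uniq.
have KB : {subset K <= B} by move=> x xK; rewrite mem_undup mem_cat xK.
have nbB : forall x s, x \in K -> x + step s \in B.
  move=> x s xK; rewrite mem_undup mem_cat; apply/orP; right.
  by apply: (allpairs_f (fun x s => x + step s)) => //; rewrite mem_index_enum.
have uT : uniq T.
  apply: allpairs_uniq => //; first exact: index_enum_uniq.
  move=> [x s] [x' s'] _ _ /= [<-] /addrI /step_inj -> //.
have gT : forall p : Zd d * Zd d, Defs.adjacent p.1 p.2 ->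
    (phi p.1 - phi p.2) ^+ 2 != 0 -> p \in T.
  move=> [y z] /= /adjacent_step [[i b] ->] nz.
  have [yK|ynK] := boolP (y \in K).
    by apply: (allpairs_f (fun x s => (x, x + step s))) => //;
      [apply: KB | rewrite mem_index_enum].
  have zK : y + step (i, b) \in K.
    apply: (inK _); apply: contra nz => /eqP ->.
    have -> : phi y = 0 by apply/eqP; apply: contraNT ynK; apply: (inK _).
    by rewrite subrr expr0n.
  apply: (allpairs_f (fun x s => (x, x + step s))); last by rewrite mem_index_enum.
  have -> : y = y + step (i, b) + step (i, ~~ b) by rewrite stepN addrK.
  exact: nbB.
set A1 := \sum_(x <- B) \sum_(s : S) phi x ^+ 2.
set A2 := \sum_(x <- B) \sum_(s : S) phi (x + step s) ^+ 2.
set A3 := \sum_(x <- B) \sum_(s : S) phi x * phi (x + step s).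
have ET : \sum_(p <- T) (phi p.1 - phi p.2) ^+ 2 = A1 + A2 - 2 * A3.
  rewrite big_allpairs_dep /A1 /A2 /A3 mulr_sumr -big_split -sumrB /=.
  apply: eq_bigr => x _; rewrite mulr_sumr -big_split -sumrB /=.
  apply: eq_bigr => s _ /=; rewrite sqrrB mulr2n; ring.
have zK : forall x, x \notin K -> phi x = 0.
  by move=> x xK; apply/eqP; apply: contraNT xK; apply: (inK _).
have HA1 : A1 <= (2 * d)%:R * Nr.
  rewrite /A1 (eq_bigr (fun x => (2 * d)%:R * phi x ^+ 2)); last first.
    by move=> x _; rewrite sumr_const card_S mulr_natl.
  rewrite -mulr_sumr -sumK ler_wpM2l //.
  apply: sum_sub_le0 => //.
    by move=> x _ /zK ->; rewrite expr0n.
  by move=> x _; apply: sqr_ge0.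
have Hs : forall s : S, \sum_(x <- B) phi (x + step s) ^+ 2 <= Nr.
  move=> s.
  rewrite -(big_map (fun x => x + step s) xpredT (fun y => phi y ^+ 2)) -sumK.
  apply: sum_sub_le0 => //.
  - by rewrite map_inj_uniq //; apply: addIr.
  - by move=> x _ /zK ->; rewrite expr0n.
  - by move=> x _; apply: sqr_ge0.
have HA2 : A2 <= (2 * d)%:R * Nr.
  rewrite /A2 exchange_big /=.
  apply: le_trans; first by apply: ler_sum => s _; exact: Hs s.
  by rewrite sumr_const card_S mulr_natl.
have HA3 : SS phi K <= A3.
  apply: sum_sub_le => // x _; apply: sumr_ge0 => s _; apply: mulr_ge0; apply: phi0.
have bT : \sum_(p <- T) (phi p.1 - phi p.2) ^+ 2 <= (2 * d)%:R * Nr * 2 - 2 * SS phi K.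
  rewrite ET; lra.
have Hes : (\esum_(p in [set p : Zd d * Zd d | Defs.adjacent p.1 p.2])
          ((phi p.1 - phi p.2) ^+ 2)%:E <= ((2 * d)%:R * Nr * 2 - 2 * SS phi K)%:E)%E.
  apply: ge_ereal_sup => y [X [finX subX] <-].
  rewrite fsbig_finite // sumEFin lee_fin.
  apply: le_trans bT; apply: sum_sub_le0 => //.
  - move=> p; rewrite in_fset_set // => /set_mem pX pT.
    apply/eqP; apply: contraNT pT; apply: (gT _); exact: (subX _).
  - by move=> p _; apply: sqr_ge0.
have Hge : (0 <= \esum_(p in [set p : Zd d * Zd d | Defs.adjacent p.1 p.2])
          ((phi p.1 - phi p.2) ^+ 2)%:E)%E.
  by apply: esum_ge0 => p _; rewrite lee_fin sqr_ge0.
have dpos : 0 < (2 * d)%:R :> R by rewrite ltr0n muln_gt0.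
rewrite /energy ler_pdivrMr //.
apply: (@le_trans _ _ ((2 * d)%:R * Nr * 2 - 2 * SS phi K)).
  by move: Hes Hge; case: (\esum_(_ in _) _)%E => [r| |] //=.
have dn0 : (d%:R : R) != 0 by rewrite pnatr_eq0 -lt0n.
rewrite le_eqVlt; apply/orP; left; apply/eqP; rewrite natrM.
by field.
Qed.
End Energy.

Lemma count_sum (R : realType) (T : Type) (P : pred T) (s : seq T) :
  (count P s)%:R = \sum_(k <- s) (if P k then 1 else 0) :> R.
Proof.
elim: s => [|x s IH]; first by rewrite big_nil.
by rewrite big_cons /= natrD IH; case: (P x).
Qed.

Lemma expR_bound (R : realType) (a b D : R) : 0 < a -> 0 < b -> 0 < D ->
  expR (1 - b / (D * a)) / D <= a / b.
Proof.
move=> a0 b0 D0.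
set t := b / (D * a).
have t0 : 0 < t by rewrite /t divr_gt0 // mulr_gt0.
have H1 : t <= expR (t - 1) by have := expR_ge1Dx (t - 1); lra.
have H2 : expR (1 - t) <= t^-1.
  by rewrite -opprB expRN lef_pV2 // ?posrE // expR_gt0.
rewrite ler_pdivrMr //.
apply: (le_trans H2); rewrite /t invf_div.
rewrite le_eqVlt; apply/orP; left; apply/eqP.
by field; rewrite lt0r_neq0.
Qed.

Section Main.
Variable R : realType.
Variable d : nat.
Local Notation S := ('I_d * bool)%type.
Variable phi : Zd d -> R.
Variable alpha : R.
Variable n : nat.
Variable w : seq S.
Hypothesis d0 : (0 < d)%N.
Hypothesis phi0 : forall y, 0 <= phi y.
Hypothesis fin : finite_set (supp phi).
Hypothesis ha : 0 < alpha < 1.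
Hypothesis sw : size w = n.
Hypothesis ev : forall x, fN R w n.+1 x = phi x.

Let K := fset_set (supp phi).
Let L x : R := (local_time w n.+1 x)%:R.
Let h y := if phi y == 0 then alpha else phi y.
Let D : R := (2 * d)%:R.

Lemma Kmem x : (x \in K) = (phi x != 0).
Proof.
rewrite /K in_fset_set //; apply/idP/idP => [/set_mem //|H]; exact: mem_set.
Qed.

Lemma phiL x : phi x ^+ 2 = L x.
Proof. by rewrite -ev /fN sqr_sqrtr // ler0n. Qed.

Lemma phi_ge1 x : phi x != 0 -> 1 <= phi x.
Proof.
rewrite -ev /fN; case E: (local_time w n.+1 x) => [|m].
  by rewrite sqrtr0 eqxx.
move=> _; rewrite -[X in X <= _]sqrtr1; by apply: ler_wsqrtr => /=; rewrite ler1n.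
Qed.

Lemma visit k : (k < n.+1)%N -> phi (pos w k) != 0.
Proof.
move=> kN; rewrite -ev /fN sqrtr_eq0 lern0 -lt0n /local_time -has_count.
apply/hasP; exists k => //.
by rewrite mem_iota.
Qed.

Lemma time_to_site (F : Zd d -> R) :
  \sum_(k <- iota 0 n.+1) F (pos w k) = \sum_(x <- K) L x * F x.
Proof.
symmetry.
rewrite (eq_bigr (fun x => \sum_(k <- iota 0 n.+1) (if pos w k == x then F x else 0))); last first.
  move=> x _; rewrite /L /local_time count_sum mulr_suml; apply: eq_bigr => k _.
  by case: ifP; rewrite ?mul1r ?mul0r.
rewrite exchange_big [RHS]big_seq [LHS]big_seq; apply: eq_bigr => k.
rewrite mem_iota => /andP[_ kN].
have kK := Kmem (pos w k); rewrite visit in kK; last by rewrite add0n in kN.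
rewrite (bigD1_seq (pos w k) kK (fset_uniq _)) /=.
rewrite eqxx big1 ?addr0 // => x /negbTE; rewrite eq_sym => -> //.
Qed.


Lemma main_w :
  1 <= phi (origin d) / alpha *
    expR (- (1 / 2) * energy phi + alpha * Num.sqrt ((n.+1)%:R * (size K)%:R)) *
    D ^+ n * Wx h 0 w.
Proof.
have /andP[a0 a1] := ha.
have hpos : forall y, 0 < h y.
  move=> y; rewrite /h; case: eqP => [_ //|/eqP nz].
  by have := phi_ge1 nz; lra.
have hge : forall y, alpha <= h y.
  move=> y; rewrite /h; case: eqP => [_ //|/eqP nz].
  by have := phi_ge1 nz; lra.
have hle : forall y, h y <= phi y + alpha.
  move=> y; rewrite /h; case: eqP => [->|_]; lra.
have Dpos : 0 < D by rewrite /D ltr0n muln_gt0.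
have Shge : forall x, D * alpha <= Sh h x.
  move=> x; rewrite /Sh /D mulr_natl -card_S -sumr_const.
  by apply: ler_sum => s _; apply: hge.
have Shpos : forall x, 0 < Sh h x.
  by move=> x; apply: lt_le_trans (Shge x); rewrite mulr_gt0.
have Sh_neq0 : forall x, Sh h x != 0 by move=> x; rewrite lt0r_neq0.
have hphi : forall k, (k < n.+1)%N -> h (pos w k) = phi (pos w k).
  by move=> k kN; rewrite /h (negbTE (visit kN)).
have tele := @Wx_tele R d h Sh_neq0 0 w.
rewrite sw in tele.
have h0 : h 0 = phi (origin d).
  by rewrite origin0 -(pos0 w) hphi.
rewrite h0 in tele.
set N := n.+1.
set a := fun y => 1 - Sh h y / (D * phi y).
set A := \sum_(k < N) a (pos w k).
have iotaE : forall F : Zd d -> R, \sum_(k < N) F (pos w k) = \sum_(k <- iota 0 N) F (pos w k).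
  by move=> F; rewrite -(big_mkord (fun _ => true) (fun k => F (pos w k))) /index_iota subn0.
have prodb : expR A / D ^+ N <= \prod_(k < N) (h (0 + pos w k) / Sh h (0 + pos w k)).
  have -> : expR A / D ^+ N = \prod_(k < N) (expR (a (pos w k)) / D).
    by rewrite prodf_div prodr_const card_ord -expR_sum.
  apply: ler_prod => k _; apply/andP; split.
    by rewrite divr_ge0 // ?expR_ge0 // ltW.
  rewrite add0r hphi //; apply: expR_bound => //.
  by rewrite lt0r visit // phi0.
have sumphi2 : \sum_(x <- K) phi x ^+ 2 = N%:R.
  have := time_to_site (fun _ => 1).
  rewrite sumr_const_seq size_iota mulr1 => ->.
  by apply: eq_bigr => x _; rewrite mulr1 phiL.
set M := \sum_(x <- K) phi x * Sh h x.
have AE : A = N%:R - M / D.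
  rewrite /A iotaE time_to_site -sumphi2 /M mulr_suml -sumrB.
  rewrite big_seq [RHS]big_seq; apply: eq_bigr => x xK.
  have nz : phi x != 0 by rewrite -Kmem.
  rewrite /a -phiL; field; rewrite nz /=.
  by rewrite pnatr_eq0 -lt0n d0.
set P := \sum_(x <- K) phi x.
have HM : M <= SS phi K + D * alpha * P.
  rewrite /M /SS /P mulr_sumr -big_split /=; apply: ler_sum => x _.
  rewrite /Sh mulr_sumr.
  rewrite (_ : D * alpha * phi x = \sum_(s : S) alpha * phi x); last first.
    by rewrite sumr_const card_S -mulr_natl /D mulrA.
  rewrite -big_split /=; apply: ler_sum => s _.
  have := hle (x + step s); have := phi0 x; have := phi0 (x + step s).
  by nra.
set Q := Num.sqrt (N%:R * (size K)%:R).
have HP : P <= Q.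
  have P0 : 0 <= P by apply: sumr_ge0 => x _; apply: phi0.
  have := cauchy_schwarz K phi; rewrite sumphi2 => cs.
  rewrite /Q -(ger0_norm P0) -sqrtr_sqr; apply: ler_wsqrtr.
  by rewrite mulrC.
have HE := energy_le d0 (fset_uniq K) (fun x nz => (eqbRL (Kmem x) nz)) phi0 sumphi2.
set E := energy phi in HE *.
have HMD : M / D <= SS phi K / D + alpha * P.
  rewrite ler_pdivrMr // mulrDl divfK ?lt0r_neq0 //.
  by rewrite (_ : alpha * P * D = D * alpha * P) //; ring.
have HSS : (d%:R)^-1 * SS phi K = 2 * (SS phi K / D).
  rewrite /D natrM; field; by rewrite pnatr_eq0 -lt0n.
have HaPQ : alpha * P <= alpha * Q by rewrite ler_wpM2l // ltW.
set B := - (1 / 2) * E + alpha * Q.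
have AB : 0 <= A + B.
  rewrite AE /B; move: HE HMD HSS HaPQ.
  set u := SS phi K / D; set v := alpha * P; set t := alpha * Q; set z := M / D.
  set y := (d%:R)^-1 * SS phi K.
  lra.
have X : D * alpha * (expR A / D ^+ N) <= Wx h 0 w * phi (origin d).
  rewrite tele; apply: ler_pM => //.
  - by rewrite mulr_ge0 // ltW.
  - by rewrite divr_ge0 ?expR_ge0 // exprn_ge0 // ltW.
have key : D * alpha * (expR A / D ^+ N) * (expR B * D ^+ n / alpha) = expR (A + B).
  rewrite [RHS]expRD /N exprS; field.
  apply/and3P; split; [exact: lt0r_neq0 | apply: expf_neq0; exact: lt0r_neq0 |].
  by rewrite pnatr_eq0 -lt0n d0.
have -> : phi (origin d) / alpha * expR B * D ^+ n * Wx h 0 w =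
    Wx h 0 w * phi (origin d) * (expR B * D ^+ n / alpha) by ring.
apply: le_trans (ler_wpM2r _ X); last first.
  by rewrite divr_ge0 ?mulr_ge0 ?expR_ge0 ?exprn_ge0 // ltW.
rewrite key; have := expR_ge1Dx (A + B); lra.
Qed.

End Main.

Theorem proposition3p2 (R : realType) (d N : nat) (phi : Zd d -> R) (alpha : R) :
  (0 < d)%N ->
  (1 <= N)%N ->
  (forall y, 0 <= phi y) ->
  finite_set (supp phi) ->
  \esum_(y in [set: Zd d]) ((phi y ^+ 2)%:E) = ((N%:R : R)%:E) ->
  0 < alpha < 1 ->
  @prob_fN_eq R d N phi <=
    phi (origin d) / alpha *
    expR (- (1 / 2) * energy phi
          + alpha * Num.sqrt (N%:R * (#|` fset_set (supp phi)|)%:R)).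
Proof.
move=> d0 N1 phi0 fin _ ha.
case: N N1 => [//|n] _.
rewrite /prob_fN_eq /=.
set C := phi (origin d) / alpha * _.
set D : R := (2 * d)%:R.
set hh := fun y => if phi y == 0 then alpha else phi y.
have Dpos : 0 < D by rewrite /D ltr0n muln_gt0.
rewrite ler_pdivrMr ?exprn_gt0 //.
set E := [set w : n.-tuple ('I_d * bool) | _].
have key : forall t : n.-tuple ('I_d * bool), t \in E -> 1 <= C * D ^+ n * Wx hh 0 t.
  move=> t; rewrite inE => /asboolP ev.
  exact: (main_w d0 phi0 fin ha (size_tuple t) ev).
have W0 : forall t : n.-tuple ('I_d * bool), 0 <= C * D ^+ n * Wx hh 0 t.
  move=> t; apply: mulr_ge0; last first.
    apply: Wx_ge0 => y; rewrite /hh; case: ifP => _; [|exact: phi0].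
    by case/andP: ha => a0 _; rewrite ltW.
  apply: mulr_ge0; last by rewrite exprn_ge0 // ltW.
  apply: mulr_ge0; last exact: expR_ge0.
  apply: divr_ge0; [exact: phi0 | by case/andP: ha => a0 _; rewrite ltW].
apply: (@le_trans _ _ (\sum_(t in E) (C * D ^+ n * Wx hh 0 t))).
  rewrite -sum1_card natr_sum; apply: ler_sum => t tE; exact: key.
apply: (@le_trans _ _ (\sum_(t : n.-tuple ('I_d * bool)) (C * D ^+ n * Wx hh 0 t))).
  rewrite [leLHS]big_mkcond /=; apply: ler_sum => t _.
  by case: ifP => _ //; apply: W0.
rewrite -mulr_sumr Wx_sum ?mulr1 //.
have hpos : forall y, 0 < hh y.
  move=> y; rewrite /hh; case: eqP => [_|/eqP nz].
    by case/andP: ha.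
  by rewrite lt0r nz phi0.
move=> x; apply: lt0r_neq0.
rewrite /Sh (bigD1 (Ordinal d0, true)) //=.
have := hpos (x + step (Ordinal d0, true)).
have : 0 <= \sum_(i | i != (Ordinal d0, true)) hh (x + step i).
  by apply: sumr_ge0 => i _; apply: ltW.
lra.
Qed.
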